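(* Let $K_1$ and $K_2$ be flag simplicial complexes. Suppose that: (1) $L_1\subset K_1$ is a non-empty full sub-complex of $K_1$; (2) $\varphi:L_1\to K_2$ is a simplicial embedding; (3) the $1$-skeleton $\varphi(L_1)^{(1)}$ is a full sub-complex of the $1$-skeleton $K_2^{(1)}$. Then $K=K_1\sqcup_\varphi K_2$ is a flag complex. In particular, $K$ is a flag complex whenever both $L_1$ and $\varphi(L_1)$ are full sub-complexes of $K_1$ and $K_2$, respectively.
   Context: A simplicial complex is flag if every finite set of pairwise adjacent vertices spans a simplex. A sub-complex $L\subset K$ is full if every simplex of $K$ all of whose vertices lie in $L$ belongs to $L$. $K_1\sqcup_\varphi K_2$ denotes the complex obtained from the disjoint union $K_1\sqcup K_2$ by identifying each simplex $\sigma$ of $L_1$ with its image $\varphi(\sigma)$. *)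

(* Defs.v *)
From HB Require Import structures.
From mathcomp Require Import all_boot.
From mathcomp Require Import finmap.
From Stdlib Require Import ClassicalDescription.
Set Implicit Arguments. Unset Strict Implicit. Unset Printing Implicit Defensive.
Local Open Scope fset_scope.

(* An (abstract) simplicial complex on a vertex type V is given by the
   predicate of its simplices (finite sets of vertices), closed under
   taking subsets.  Vertices of K are the v with K [fset v]. *)
Definition complex (V : choiceType) := {fset V} -> Prop.

Definition is_complex (V : choiceType) (K : complex V) : Prop :=
  forall s t : {fset V}, K s -> t `<=` s -> K t.

(* flag: every non-empty finite set of pairwise adjacent vertices is a
   simplex (for x = y the hypothesis says x is a vertex). *)
Definition is_flag (V : choiceType) (K : complex V) : Prop :=
  forall s : {fset V}, s != fset0 ->
    (forall x y, x \in s -> y \in s -> K [fset x; y]) -> K s.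

Definition subcomplex (V : choiceType) (L K : complex V) : Prop :=
  is_complex L /\ forall s, L s -> K s.

Definition full_sub (V : choiceType) (L K : complex V) : Prop :=
  subcomplex L K /\
  forall s, K s -> (forall x, x \in s -> L [fset x]) -> L s.

Definition skeleton1 (V : choiceType) (K : complex V) : complex V :=
  fun s => K s /\ (#|` s| <= 2)%N.

Definition simplicial_embedding (V1 V2 : choiceType) (L : complex V1)
    (K2 : complex V2) (f : V1 -> V2) : Prop :=
  (forall s, L s -> K2 [fset f x | x in s]) /\
  (forall x y, L [fset x] -> L [fset y] -> f x = f y -> x = y).

Definition image_complex (V1 V2 : choiceType) (f : V1 -> V2)
    (L : complex V1) : complex V2 :=
  fun s => exists t, L t /\ s = [fset f x | x in t].

(* The glued complex K1 ⊔_f K2, on vertex type V1 + V2: a vertex v of L1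
   (i.e. inl v) is identified with inr (f v).  The representative map: *)
Definition glue_rep (V1 V2 : choiceType) (L1 : complex V1) (f : V1 -> V2)
    (z : V1 + V2) : V1 + V2 :=
  match z with
  | inl v => if excluded_middle_informative (L1 [fset v]) then inr (f v) else inl v
  | inr w => inr w
  end.

Definition glue (V1 V2 : choiceType) (K1 : complex V1) (K2 : complex V2)
    (L1 : complex V1) (f : V1 -> V2) : complex (V1 + V2)%type :=
  fun s =>
    (exists t, K1 t /\ s = [fset glue_rep L1 f (inl x) | x in t]) \/
    (exists t, K2 t /\ s = [fset (inr y : (V1 + V2)%type) | y in t]).

(* Main.v *)
Require Import Defs.
From HB Require Import structures.
From mathcomp Require Import all_boot.
From mathcomp Require Import finmap.
From Stdlib Require Import ClassicalDescription ClassicalEpsilon Classical.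
Local Open Scope fset_scope.

Lemma rep_cases (V1 V2 : choiceType) (L1 : complex V1) (f : V1 -> V2) u :
  (L1 [fset u] /\ glue_rep L1 f (inl u) = inr (f u)) \/
  (~ L1 [fset u] /\ glue_rep L1 f (inl u) = inl u).
Proof. rewrite /glue_rep /=; destruct (ClassicalDescription.excluded_middle_informative (L1 [fset u])) as [h|h]; [left|right]; split => //.
Qed.

Lemma sub2 (K : choiceType) (x y : K) (t : {fset K}) :
  x \in t -> y \in t -> [fset x; y] `<=` t.
Proof. move=> hx hy; apply/fsubsetP => z; rewrite in_fset2 => /orP[]/eqP->//. Qed.

Lemma rep_inj (V1 V2 : choiceType) (L1 : complex V1) (f : V1 -> V2) (K2 : complex V2) a b :
  simplicial_embedding L1 K2 f ->
  glue_rep L1 f (inl a) = glue_rep L1 f (inl b) -> a = b.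
Proof.
move=> [_ inj].
case: (@rep_cases _ _ L1 f a) => [[ha ->]|[ha ->]];
case: (@rep_cases _ _ L1 f b) => [[hb ->]|[hb ->]] //.
- by case=> e; apply: inj ha hb e.
- by case.
Qed.

Lemma rep_inr (V1 V2 : choiceType) (L1 : complex V1) (f : V1 -> V2) u w :
  glue_rep L1 f (inl u) = inr w -> L1 [fset u] /\ w = f u.
Proof.
case: (@rep_cases _ _ L1 f u) => [[h ->]|[h ->]] //; by case=> ->.
Qed.
Arguments rep_inr {V1 V2 L1 f u w}.

Lemma glue_flag (V1 V2 : choiceType) (K1 : complex V1) (K2 : complex V2)
    (L1 : complex V1) (f : V1 -> V2) :
  is_complex K1 -> is_complex K2 ->
  is_flag K1 -> is_flag K2 ->
  full_sub L1 K1 ->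
  simplicial_embedding L1 K2 f ->
  (forall u1 u2, L1 [fset u1] -> L1 [fset u2] -> K2 [fset f u1; f u2] ->
     K1 [fset u1; u2]) ->
  is_flag (glue K1 K2 L1 f).
Proof.
move=> cK1 cK2 fK1 fK2 [[cL1 LK1] fullL] [emb inj] H3 s s0 Hp.
have vK1 : forall t a, K1 t -> a \in t -> K1 [fset a].
  by move=> t a Kt ta; apply: cK1 Kt _; rewrite fsub1set.
case: (classic (exists v, inl v \in s)) => [[v vs]|noinl].
- have ex: forall z, z \in s -> exists u, K1 [fset u] /\ glue_rep L1 f (inl u) = z.
    move=> z zs; case: (Hp _ _ vs zs) => [[t [Kt e]]|[t [Kt e]]].
    + have: z \in [fset glue_rep L1 f (inl x) | x in t] by rewrite -e in_fset2 eqxx orbT.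
      case/imfsetP => a ta ->; exists a; split => //; exact: vK1 Kt ta.
    + have: inl v \in [fset (inr y : (V1+V2)%type) | y in t] by rewrite -e in_fset2 eqxx.
      by case/imfsetP.
  pose P z u := K1 [fset u] /\ glue_rep L1 f (inl u) = z.
  pose g z := epsilon (inhabits v) (P z).
  have gP : forall z, z \in s -> P z (g z).
    by move=> z zs; apply: (epsilon_spec (inhabits v) (P z) (ex z zs)).
  left; exists [fset g z | z in s]; split; last first.
  + apply/fsetP => z; apply/idP/imfsetP.
    * move=> zs; exists (g z); first exact: in_imfset.
      by rewrite (gP z zs).2.
    * case => u /imfsetP [z' z's ->] ->; by rewrite (gP z' z's).2.
  + apply: fK1.
    * case/fset0Pn: s0 => z zs; apply/fset0Pn; exists (g z); exact: in_imfset.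
    * move=> x y /imfsetP [z1 z1s ->] /imfsetP [z2 z2s ->].
      case: (gP z1 z1s) => K1u1 e1; case: (gP z2 z2s) => K1u2 e2.
      case: (Hp _ _ z1s z2s) => [[t [Kt e]]|[t [Kt e]]].
      -- apply: cK1 Kt _; apply: sub2.
         ++ have: z1 \in [fset glue_rep L1 f (inl x) | x in t] by rewrite -e in_fset2 eqxx.
            case/imfsetP => a ta ea.
            have -> : g z1 = a.
              by apply: (@rep_inj _ _ L1 f K2 _ _ (conj emb inj)); rewrite e1 -ea.
            exact: ta.
         ++ have: z2 \in [fset glue_rep L1 f (inl x) | x in t] by rewrite -e in_fset2 eqxx orbT.
            case/imfsetP => a ta ea.
            have -> : g z2 = a.
              by apply: (@rep_inj _ _ L1 f K2 _ _ (conj emb inj)); rewrite e2 -ea.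
            exact: ta.
      -- have: z1 \in [fset (inr y : (V1+V2)%type) | y in t] by rewrite -e in_fset2 eqxx.
         case/imfsetP => w1 w1t ew1.
         have: z2 \in [fset (inr y : (V1+V2)%type) | y in t] by rewrite -e in_fset2 eqxx orbT.
         case/imfsetP => w2 w2t ew2.
         subst z1 z2.
         case: (rep_inr e1) => L1a eq1; rewrite eq1 in w1t.
         case: (rep_inr e2) => L1b eq2; rewrite eq2 in w2t.
         apply: H3 => //; apply: cK2 Kt _; exact: sub2.
- case/fset0Pn: (s0) => z0 z0s.
  have allr: forall z, z \in s -> exists w, z = inr w.
    by move=> [v|w] zs; [case: noinl; exists v | exists w].
  case: (allr z0 z0s) => w0 _.
  pose h (z : (V1 + V2)%type) := match z with inr w => w | inl _ => w0 end.
  right; exists [fset h z | z in s]; split; last first.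
  + apply/fsetP => z; apply/idP/imfsetP.
    * move=> zs; exists (h z); first exact: in_imfset.
      by case: (allr z zs) => w ->.
    * case => w /imfsetP [z' z's ->] ->; by case: (allr z' z's) => w' e; subst.
  + apply: fK2.
    * apply/fset0Pn; exists (h z0); exact: in_imfset.
    * move=> x y /imfsetP [z1 z1s ->] /imfsetP [z2 z2s ->].
      case: (allr _ z1s) => w1 e1; case: (allr _ z2s) => w2 e2; subst z1 z2 => /=.
      case: (Hp _ _ z1s z2s) => [[t [Kt e]]|[t [Kt e]]].
      -- have Lt: L1 t.
           apply: fullL => // a ta.
           have: glue_rep L1 f (inl a) \in [fset (inr w1 : (V1+V2)%type); inr w2].
             by rewrite e; exact: in_imfset.
           by case: (@rep_cases _ _ L1 f a) => [[]//|[_ ->]]; rewrite in_fset2.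
         apply: cK2 (emb _ Lt) _; apply: sub2.
         ++ have: (inr w1 : (V1+V2)%type) \in [fset glue_rep L1 f (inl x) | x in t]
              by rewrite -e in_fset2 eqxx.
            case/imfsetP => a ta /esym /rep_inr [_ ->]; exact: in_imfset.
         ++ have: (inr w2 : (V1+V2)%type) \in [fset glue_rep L1 f (inl x) | x in t]
              by rewrite -e in_fset2 eqxx orbT.
            case/imfsetP => a ta /esym /rep_inr [_ ->]; exact: in_imfset.
      -- apply: cK2 Kt _; apply: sub2.
         ++ have: (inr w1 : (V1+V2)%type) \in [fset (inr y : (V1+V2)%type) | y in t]
              by rewrite -e in_fset2 eqxx.
            by case/imfsetP => a ta [->].
         ++ have: (inr w2 : (V1+V2)%type) \in [fset (inr y : (V1+V2)%type) | y in t]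
              by rewrite -e in_fset2 eqxx orbT.
            by case/imfsetP => a ta [->].
Qed.

Lemma image_pair (V1 V2 : choiceType) (K1 : complex V1) (L1 : complex V1)
    (K2 : complex V2) (f : V1 -> V2) u1 u2 :
  is_complex K1 -> full_sub L1 K1 -> simplicial_embedding L1 K2 f ->
  L1 [fset u1] -> L1 [fset u2] ->
  image_complex f L1 [fset f u1; f u2] -> K1 [fset u1; u2].
Proof.
move=> cK1 [[cL1 LK1] _] [_ inj] Lu1 Lu2 [t [Lt et]].
apply: cK1 (LK1 _ Lt) _; apply: sub2.
- have: f u1 \in [fset f x | x in t] by rewrite -et in_fset2 eqxx.
  case/imfsetP => a ta e.
  have La : L1 [fset a] by apply: cL1 Lt _; rewrite fsub1set.
  by rewrite (inj _ _ Lu1 La e).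
- have: f u2 \in [fset f x | x in t] by rewrite -et in_fset2 eqxx orbT.
  case/imfsetP => a ta e.
  have La : L1 [fset a] by apply: cL1 Lt _; rewrite fsub1set.
  by rewrite (inj _ _ Lu2 La e).
Qed.

Theorem mainTheorem1 (V1 V2 : choiceType) (K1 : complex V1) (K2 : complex V2)
    (L1 : complex V1) (f : V1 -> V2) :
  is_complex K1 -> is_complex K2 ->
  is_flag K1 -> is_flag K2 ->
  full_sub L1 K1 ->
  (exists s, s != fset0 /\ L1 s) ->
  simplicial_embedding L1 K2 f ->
  (full_sub (skeleton1 (image_complex f L1)) (skeleton1 K2) ->
     is_flag (glue K1 K2 L1 f)) /\
  (full_sub (image_complex f L1) K2 ->
     is_flag (glue K1 K2 L1 f)).
Proof.
move=> cK1 cK2 fK1 fK2 HL _ He.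
have vimg : forall u, L1 [fset u] -> image_complex f L1 [fset f u].
  by move=> u Lu; exists [fset u]; split => //; rewrite imfset_fset1.
split=> Hfull; apply: glue_flag => // u1 u2 L1u L2u K2e;
  apply: (@image_pair _ _ K1 L1 K2 f u1 u2 cK1 HL He L1u L2u).
- have Sk : skeleton1 K2 [fset f u1; f u2].
    by split => //; rewrite cardfs2; case: (_ != _).
  case: (Hfull.2 _ Sk) => // x; rewrite in_fset2 => /orP[]/eqP->;
    (split; [apply: vimg => // | by rewrite cardfs1]).
- apply: Hfull.2 => // x; rewrite in_fset2 => /orP[]/eqP->; exact: vimg.
Qed.
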